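(* $\mathrm{CH}_1=\mathrm{CH}^{\varepsilon}_1$: a language is recognised by a history-deterministic $1$-VASS without $\varepsilon$-transitions under coverability acceptance if and only if it is recognised by a history-deterministic $1$-VASS with $\varepsilon$-transitions under coverability acceptance.
   Context: Fix a finite alphabet $\Sigma$. A $k$-VASS with $\varepsilon$-transitions is a tuple $(Q,q_0,F,\delta)$ with $Q$ a finite set of states, $q_0\in Q$ initial, $F\subseteq Q$ accepting, and $\delta\subseteq Q\times(\Sigma\cup\{\varepsilon\})\times\mathbb{Z}^k\times Q$ finite. A run is a sequence of transitions $(p_{i-1},\ell_i,d_i,p_i)$ with $p_0=q_0$ such that the counter vectors $v_0=\vec 0$, $v_i=v_{i-1}+d_i$ all lie in $\mathbb{N}^k$; it is a run on the word obtained by concatenating the labels $\ell_i$ (with $\varepsilon$ the empty word). Under coverability acceptance a run is accepting if its last state is in $F$; the language is the set of words having an accepting run. A VASS without $\varepsilon$-transitions is one with $\delta\subseteq Q\times\Sigma\times\mathbb{Z}^k\times Q$. A VASS (possibly with $\varepsilon$-transitions) is history-deterministic if there is a resolver which, given the run prefix built so far and the next input letter $a$, chooses a finite sequence of $\varepsilon$-transitions followed by one transition labelled $a$, and which at the end of the input chooses a final finite sequence of $\varepsilon$-transitions, such that for every word $w$ in the language the sequence of transitions so produced on $w$ is a run (counters stay nonnegative) and is accepting. (Without $\varepsilon$-transitions this is a function choosing one transition labelled $a$ at each step.) $\mathrm{CH}_1$ denotes the class of languages recognised by history-deterministic $1$-VASS without $\varepsilon$-transitions under coverability acceptance, and $\mathrm{CH}^{\varepsilon}_1$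 the class recognised by history-deterministic $1$-VASS with $\varepsilon$-transitions under coverability acceptance. *)

(* Defs.v *)
From mathcomp Require Import all_boot all_order all_algebra.
Set Implicit Arguments. Unset Strict Implicit. Unset Printing Implicit Defensive.
Import Order.TTheory GRing.Theory Num.Theory.
Local Open Scope ring_scope.

Definition trans_src {Q L : Type} (t : Q * L * int * Q) : Q := t.1.1.1.
Definition trans_lab {Q L : Type} (t : Q * L * int * Q) : L := t.1.1.2.
Definition trans_upd {Q L : Type} (t : Q * L * int * Q) : int := t.1.2.
Definition trans_tgt {Q L : Type} (t : Q * L * int * Q) : Q := t.2.

Fixpoint is_run {Q : finType} {L : eqType} (delta : seq (Q * L * int * Q))
    (q : Q) (c : int) (ts : seq (Q * L * int * Q)) : bool :=
  match ts with
  | [::] => true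
  | t :: ts' => [&& t \in delta, trans_src t == q, 0 <= c + trans_upd t
                  & is_run delta (trans_tgt t) (c + trans_upd t) ts']
  end.

Definition last_state {Q L : Type} (q : Q) (ts : seq (Q * L * int * Q)) : Q :=
  last q (map trans_tgt ts).

Section VASS.
Variable Sigma : finType.

Record VASS1 := {
  vQ : finType;
  vq0 : vQ;
  vF : {set vQ};
  vdelta : seq (vQ * Sigma * int * vQ)
}.

Definition vtrans (A : VASS1) := (vQ A * Sigma * int * vQ A)%type.

Definition vaccepting (A : VASS1) (ts : seq (vtrans A)) : bool :=
  is_run (vdelta A) (vq0 A) 0 ts && (last_state (vq0 A) ts \in vF A).

Definition vlang (A : VASS1) (w : seq Sigma) : Prop :=
  exists ts : seq (vtrans A), vaccepting ts && (map trans_lab ts == w).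

Fixpoint vresolve (A : VASS1) (r : seq (vtrans A) -> Sigma -> vtrans A)
    (pre : seq (vtrans A)) (w : seq Sigma) : seq (vtrans A) :=
  match w with
  | [::] => pre
  | a :: w' => vresolve r (rcons pre (r pre a)) w'
  end.

Definition vHD (A : VASS1) : Prop :=
  exists r : seq (vtrans A) -> Sigma -> vtrans A,
    forall w, vlang A w ->
      let ts := vresolve r [::] w in
      vaccepting ts && (map trans_lab ts == w).

(* ---------- 1-VASS with epsilon-transitions (None = epsilon) ---------- *)
Record EVASS1 := {
  eQ : finType;
  eq0 : eQ;
  eF : {set eQ};
  edelta : seq (eQ * option Sigma * int * eQ)
}.

Definition etrans (A : EVASS1) := (eQ A * option Sigma * int * eQ A)%type.

Definition eaccepting (A : EVASS1) (ts : seq (etrans A)) : bool :=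
  is_run (edelta A) (eq0 A) 0 ts && (last_state (eq0 A) ts \in eF A).

Definition eword (A : EVASS1) (ts : seq (etrans A)) : seq Sigma :=
  pmap id (map trans_lab ts).

Definition elang (A : EVASS1) (w : seq Sigma) : Prop :=
  exists ts : seq (etrans A), eaccepting ts && (eword ts == w).

(* Resolver: r pre a = chosen block (eps-transitions then one a-transition),
   f pre = final block of eps-transitions. *)
Fixpoint eresolve (A : EVASS1) (r : seq (etrans A) -> Sigma -> seq (etrans A))
    (f : seq (etrans A) -> seq (etrans A))
    (pre : seq (etrans A)) (w : seq Sigma) : seq (etrans A) :=
  match w with
  | [::] => pre ++ f pre
  | a :: w' => eresolve r f (pre ++ r pre a) w'
  end.

Fixpoint eresolve_shape (A : EVASS1) (r : seq (etrans A) -> Sigma -> seq (etrans A))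
    (f : seq (etrans A) -> seq (etrans A))
    (pre : seq (etrans A)) (w : seq Sigma) : bool :=
  match w with
  | [::] => map trans_lab (f pre) == nseq (size (f pre)) None
  | a :: w' =>
      (map trans_lab (r pre a) == rcons (nseq (size (r pre a)).-1 None) (Some a))
      && eresolve_shape r f (pre ++ r pre a) w'
  end.

Definition eHD (A : EVASS1) : Prop :=
  exists (r : seq (etrans A) -> Sigma -> seq (etrans A))
         (f : seq (etrans A) -> seq (etrans A)),
    forall w, elang A w ->
      eresolve_shape r f [::] w && eaccepting (eresolve r f [::] w).

End VASS.

Definition CH1 (Sigma : finType) (L : seq Sigma -> Prop) : Prop :=
  exists A : VASS1 Sigma, vHD A /\ forall w, L w <-> vlang A w.

Definition CH1eps (Sigma : finType) (L : seq Sigma -> Prop) : Prop :=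
  exists A : EVASS1 Sigma, eHD A /\ forall w, L w <-> elang A w.

(* Main.v *)
Require Import Defs.
From mathcomp Require Import all_boot all_order all_algebra.
From mathcomp Require Import zify.
Set Implicit Arguments. Unset Strict Implicit. Unset Printing Implicit Defensive.
Import Order.TTheory GRing.Theory Num.Theory.
Local Open Scope ring_scope.

Definition sumU {Q L : Type} (ts : seq (Q * L * int * Q)) : int :=
  \sum_(t <- ts) trans_upd t.

Section Runs.
Variables (Q : finType) (L : eqType) (d : seq (Q * L * int * Q)).
Implicit Types (ts s : seq (Q * L * int * Q)) (t : Q * L * int * Q) (p : Q) (c : int).

Lemma sumU_cons t ts : sumU (t :: ts) = trans_upd t + sumU ts.
Proof. by rewrite /sumU big_cons. Qed.
Lemma sumU_cat (s1 s2 : seq (Q * L * int * Q)) : sumU (s1 ++ s2) = sumU s1 + sumU s2.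
Proof. by rewrite /sumU big_cat. Qed.
Lemma sumU_nil : @sumU Q L [::] = 0.
Proof. by rewrite /sumU big_nil. Qed.

Lemma last_state_cons (p : Q) (t : Q * L * int * Q) ts :
  last_state p (t :: ts) = last_state (trans_tgt t) ts.
Proof. by []. Qed.

Lemma last_state_cat (p : Q) (s1 s2 : seq (Q * L * int * Q)) :
  last_state p (s1 ++ s2) = last_state (last_state p s1) s2.
Proof. by rewrite /last_state map_cat last_cat. Qed.

Lemma is_run_cat p c (s1 s2 : seq (Q * L * int * Q)) :
  is_run d p c (s1 ++ s2) =
  is_run d p c s1 && is_run d (last_state p s1) (c + sumU s1) s2.
Proof.
elim: s1 p c => [|t s1 IH] p c /=; first by rewrite sumU_nil addr0.
by rewrite IH sumU_cons addrA -!andbA.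
Qed.

Lemma is_run_mono p c c' s : is_run d p c s -> c <= c' -> is_run d p c' s.
Proof.
elim: s p c c' => [|t s IH] p c c' //= /and4P[H1 H2 H3 H4] Hc.
apply/and4P; split => //; first by apply: le_trans H3 _; rewrite lerD2r.
by apply: IH H4 _; rewrite lerD2r.
Qed.

Lemma is_run_ge0 p c s : is_run d p c s -> 0 <= c -> 0 <= c + sumU s.
Proof.
elim: s p c => [|t s IH] p c /=; first by rewrite sumU_nil addr0.
move=> /and4P[_ _ H3 H4] _; rewrite sumU_cons addrA; exact: IH H4 H3.
Qed.

Variable M : nat.
Hypothesis HM : forall t, t \in d -> (`|trans_upd t| <= M)%N.

Lemma is_run_large p c s y :
  is_run d p c s -> ((size s * M)%:R <= y)%R -> is_run d p y s.
Proof.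
elim: s p c y => [|t s IH] p c y //= /and4P[H1 H2 H3 H4] Hy.
have Hb := HM H1.
have : (- (M%:Z) <= trans_upd t) by move: Hb; case: (trans_upd t) => n /=; lia.
move=> Hb'.
apply/and4P; split => //.
  move: Hy; rewrite mulSn natrD; lia.
apply: IH H4 _. move: Hy; rewrite mulSn natrD; lia.
Qed.

Lemma sumU_bound s : all (mem d) s -> `|sumU s| <= (size s * M)%:R.
Proof.
elim: s => [|t s IH] /=; first by rewrite sumU_nil normr0.
move=> /andP[H1 H2]; rewrite sumU_cons mulSn natrD.
apply: le_trans (ler_normD _ _) _; apply: lerD; last exact: IH.
have := HM H1; case: (trans_upd t) => n /=; lia.
Qed.

End Runs.

Section Dichot.
Variables (Sigma : finType) (A : EVASS1 Sigma).
Local Notation Q := (eQ A).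
Local Notation dl := (edelta A).
Local Notation TR := (Q * option Sigma * int * Q)%type.
Implicit Types (ts s : seq TR) (t : TR) (p q : Q) (c x : int).

Definition shape ts (a : Sigma) : bool :=
  map trans_lab ts == rcons (nseq (size ts).-1 None) (Some a).

Definition isEps t : bool := trans_lab t == None.

Lemma shapeP ts a : shape ts a ->
  exists eps ta, [/\ ts = rcons eps ta, all isEps eps & trans_lab ta = Some a].
Proof.
case/lastP: ts => [|eps ta]; first by [].
rewrite /shape size_rcons /= map_rcons eqseq_rcons => /andP[/eqP Hb /eqP Hl].
exists eps, ta; split => //.
elim: eps Hb {Hl} => //= t eps IH [Ht Hb]; rewrite /isEps Ht eqxx /=; exact: IH.
Qed.

Lemma shape_mk eps ta a : all isEps eps -> trans_lab ta = Some a -> shape (rcons eps ta) a.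
Proof.
move=> He Hl; rewrite /shape size_rcons /= map_rcons Hl.
apply/eqP; congr rcons; elim: eps He => //= t eps IH /andP[/eqP -> ?].
by rewrite IH.
Qed.

Lemma all_flatten_nseq (P : pred TR) n s : all P s -> all P (flatten (nseq n s)).
Proof. by move=> H; elim: n => //= n IH; rewrite all_cat H. Qed.

Lemma pump (st : Q) x (sg : seq TR) : is_run dl st x sg -> last_state st sg = st -> 0 <= sumU sg ->
  forall k y, x <= y ->
   [&& is_run dl st y (flatten (nseq k sg)),
       last_state st (flatten (nseq k sg)) == st &
       sumU (flatten (nseq k sg)) == k%:R * sumU sg].
Proof.
move=> Hr Hl Hs; elim=> [|k IH] y Hy /=.
  by rewrite sumU_nil mul0r !eqxx.
rewrite is_run_cat last_state_cat sumU_cat Hl (is_run_mono Hr Hy) /=.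
have Hy' : x <= y + sumU sg by apply: le_trans Hy _; rewrite lerDl.
case/and3P: (IH _ Hy') => -> /eqP -> /eqP ->; rewrite eqxx /=.
by apply/eqP; rewrite mulrSr mulrDl mul1r addrC.
Qed.

Definition Ep p a q c : Prop := forall N : nat, exists ts,
  [&& is_run dl p c ts, shape ts a, last_state p ts == q & N%:R <= c + sumU ts].

Lemma nth_last_state (x0 : Q) p s i : (i <= size s)%N ->
  nth x0 (p :: map trans_tgt s) i = last_state p (take i s).
Proof.
elim: s p i => [|t s IH] p [|i] //=.
by rewrite ltnS => Hi; rewrite IH.
Qed.

Lemma dichot a : forall n ts p c, (size ts <= n)%N -> is_run dl p c ts -> shape ts a -> 0 <= c ->
  (exists ts', [&& is_run dl p c ts', shape ts' a, last_state p ts' == last_state p ts,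
                  sumU ts <= sumU ts' & (size ts' <= #|Q|.+1)%N])
  \/ Ep p a (last_state p ts) c.
Proof.
elim=> [|n IH] ts p c Hn Hr Hs Hc.
  left; exists ts; rewrite Hr Hs eqxx lexx /=; apply: leq_trans Hn _; exact: leq0n.
case: (leqP (size ts) #|Q|.+1) => Hsz.
  by left; exists ts; rewrite Hr Hs eqxx lexx Hsz.
have [eps [ta [Hts Heps Hta]]] := shapeP Hs.
subst ts; rewrite size_rcons ltnS in Hsz.
set sts := p :: map trans_tgt eps.
have : ~~ uniq sts.
  apply/negP => /card_uniqP Hu.
  have := max_card (mem sts); rewrite Hu /sts /= size_map => H.
  by move: (ltn_trans Hsz H); rewrite ltnn.
case/(uniqPn p) => i [j [Hij Hj Hnth]].
have Hjs : (j <= size eps)%N by move: Hj; rewrite /sts /= size_map.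
rewrite !nth_last_state in Hnth; try lia.
set pre := take i eps. set sg := drop i (take j eps). set rest := drop j eps.
have Heq : eps = pre ++ sg ++ rest.
  by rewrite /pre /sg /rest -(take_takel eps (ltnW Hij)) catA !cat_take_drop.
have Htj : take j eps = pre ++ sg.
  by rewrite /pre /sg -{1}(take_takel eps (ltnW Hij)) cat_take_drop.
rewrite Htj last_state_cat in Hnth.
set s0 := last_state p pre in Hnth.
have Hall := Heps; rewrite Heq !all_cat in Hall; case/and3P: Hall => Hpre Hsg Hrest.
have Hr2 : is_run dl p c (pre ++ rcons (sg ++ rest) ta) by rewrite -rcons_cat -Heq.
move: Hr2; rewrite is_run_cat => /andP[Hrpre].
rewrite rcons_cat is_run_cat -/s0 -Hnth => /andP[Hrsg Hrrest].
have Hlast : last_state p (rcons eps ta) = last_state s0 (rcons rest ta).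
  by rewrite Heq !rcons_cat !last_state_cat -Hnth.
have Hsum : sumU (rcons eps ta) = sumU pre + sumU sg + sumU (rcons rest ta).
  by rewrite Heq !rcons_cat !sumU_cat addrA.
have Hge := is_run_ge0 Hr Hc.
case: (ltrP 0 (sumU sg)) => Hpos.
  right; rewrite Hlast => N.
  have := pump Hrsg (esym Hnth) (ltW Hpos) N (lexx _).
  set F := flatten _; case/and3P => HF1 /eqP HF2 /eqP HF3.
  exists (pre ++ F ++ sg ++ rcons rest ta); apply/and4P; split.
  - have HF0 : 0 <= sumU F by rewrite HF3 mulr_ge0 // ?ler0n // ltW.
    rewrite is_run_cat Hrpre /= is_run_cat -/s0 HF1 /= HF2 is_run_cat -Hnth.
    rewrite (is_run_mono Hrsg) /=; last lia.
    by apply: is_run_mono Hrrest _; rewrite lerD2r lerDl.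
  - by rewrite !catA -rcons_cat; apply: shape_mk => //; rewrite !all_cat Hpre Hsg Hrest all_flatten_nseq.
  - by rewrite !last_state_cat -/s0 HF2 -Hnth.
  - rewrite !sumU_cat HF3.
    have : N%:R <= N%:R * sumU sg :> int.
      by rewrite ler_peMr // ?ler0n //; move: Hpos; lia.
    move: Hge; rewrite Hsum; move: (N%:R * sumU sg) => X.
    move: (sumU pre) (sumU sg) (sumU (rcons rest ta)) => x1 x2 x3; lia.
have Hsz' : (size (rcons (pre ++ rest) ta) <= n)%N.
  move: Hn; rewrite Heq !size_rcons !size_cat /sg size_drop (size_takel Hjs); lia.
have Hr' : is_run dl p c (rcons (pre ++ rest) ta).
  rewrite rcons_cat is_run_cat Hrpre /=; apply: is_run_mono Hrrest _.
  move: (sumU pre) (sumU sg) Hpos => x1 x2; lia.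
have Hs' : shape (rcons (pre ++ rest) ta) a by apply: shape_mk; rewrite // all_cat Hpre Hrest.
have Hl' : last_state p (rcons (pre ++ rest) ta) = last_state p (rcons eps ta).
  by rewrite Hlast rcons_cat last_state_cat.
have Hsum' : sumU (rcons eps ta) <= sumU (rcons (pre ++ rest) ta).
  rewrite Hsum rcons_cat sumU_cat.
  move: (sumU pre) (sumU sg) (sumU (rcons rest ta)) Hpos => x1 x2 x3; lia.
case: (IH _ _ _ Hsz' Hr' Hs' Hc) => [[ts' /and5P[H1 H2 H3 H4 H5]]|HE].
  left; exists ts'; rewrite H1 H2 H5 -Hl' H3 andbT /=; exact: le_trans Hsum' H4.
by right; rewrite -Hl'.
Qed.

End Dichot.

From Stdlib Require Import ClassicalEpsilon.

Definition pb (P : Prop) : bool := if excluded_middle_informative P then true else false.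
Lemma pbP (P : Prop) : reflect P (pb P).
Proof. by rewrite /pb; case: excluded_middle_informative => H; constructor. Qed.

Definition cmin (P : nat -> Prop) : nat :=
  match excluded_middle_informative (exists n, pb (P n)) with
  | left H => ex_minn H | right _ => 0%N end.
Lemma cminP (P : nat -> Prop) n : P n -> P (cmin P) /\ forall m, P m -> (cmin P <= m)%N.
Proof.
move=> Hn; rewrite /cmin; case: excluded_middle_informative => [H|H]; last first.
  by exfalso; apply: H; exists n; apply/pbP.
case: ex_minnP => m /pbP Hm Hmin; split => // k Hk; apply: Hmin; exact/pbP.
Qed.

Lemma pmap_nseq_None (T : Type) k : pmap id (nseq k (@None T)) = [::].
Proof. by elim: k. Qed.

Section Construct.
Variables (Sigma : finType) (A : EVASS1 Sigma).
Local Notation Q := (eQ A).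
Local Notation dl := (edelta A).
Local Notation TR := (Q * option Sigma * int * Q)%type.
Implicit Types (ts s : seq TR) (t : TR) (p q : Q) (c x : int).

Definition AccA p c (w : seq Sigma) : Prop := exists ts,
  [&& is_run dl p c ts, last_state p ts \in eF A & pmap id (map trans_lab ts) == w].

Lemma is_run_all p c s : is_run dl p c s -> all (mem dl) s.
Proof. elim: s p c => //= t s IH p c /and4P[-> _ _ H]; exact: IH H. Qed.

Lemma AccA_mono p c c' w : AccA p c w -> c <= c' -> AccA p c' w.
Proof.
move=> [ts /and3P[H1 H2 H3]] Hc; exists ts; apply/and3P; split => //; exact: is_run_mono H1 Hc.
Qed.

Lemma pmap_shape ts a : shape ts a -> pmap id (map trans_lab ts) = [:: a].
Proof. by move/eqP => ->; rewrite -cats1 pmap_cat pmap_nseq_None. Qed.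

Lemma AccA_step p c ts a w : is_run dl p c ts -> shape ts a ->
  AccA (last_state p ts) (c + sumU ts) w -> AccA p c (a :: w).
Proof.
move=> Hr Hs [ts2 /and3P[H1 H2 /eqP H3]]; exists (ts ++ ts2).
by rewrite is_run_cat Hr H1 last_state_cat H2 map_cat pmap_cat (pmap_shape Hs) H3 /= eqxx.
Qed.

Definition M : nat := foldr (fun t m => `|trans_upd t|%N + m)%N 0%N dl.
Lemma HM t : t \in dl -> (`|trans_upd t| <= M)%N.
Proof.
rewrite /M; elim: dl => //= t' l IH; rewrite inE => /orP[/eqP ->|H].
  exact: leq_addr.
apply: leq_trans (IH H) _; exact: leq_addl.
Qed.

Definition E : nat := (#|Q|.+1 * M)%N.
Definition phi p : nat := cmin (fun n => AccA p n%:Z [::]).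
Definition Phi : nat := \max_(p : Q) phi p.
Definition R : nat := (E.*2 + Phi)%N.
Definition theta p a q : nat := cmin (fun n => Ep p a q n%:Z).

Notation BQ := ((Q * 'I_R.+1) + Q)%type.
Notation TB := (BQ * Sigma * int * BQ)%type.

Definition NI := (Q * 'I_R.+1 * Sigma * Q * 'I_R.+1 * 'I_(E.*2).+1)%type.
Definition EI := (Q * 'I_R.+1 * Sigma * Q)%type.
Definition OI := (Q * Sigma * Q)%type.

Definition TT p a q x e : Prop := exists ts,
  [&& is_run dl p x ts, shape ts a, last_state p ts == q & e <= sumU ts].

Definition eeN (e : 'I_(E.*2).+1) : int := (e : nat)%:Z - E%:Z.

Definition mkN (i : NI) : TB :=
  let '(p, r, a, q, r', e) := i in
  (inl (p, r), a, (r : nat)%:Z + eeN e - (r' : nat)%:Z, inl (q, r')).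
Definition goodN (i : NI) : bool :=
  let '(p, r, a, q, r', e) := i in
  pb (0 <= (r' : nat)%:Z - eeN e /\ TT p a q ((r' : nat)%:Z - eeN e) (eeN e)).
Definition mkE (i : EI) : TB :=
  let '(p, r, a, q) := i in (inl (p, r), a, (r : nat)%:Z - (theta p a q)%:Z, inr q).
Definition goodE (i : EI) : bool :=
  let '(p, r, a, q) := i in pb (exists n : nat, Ep p a q n%:Z).
Definition mkO (i : OI) : TB := let '(q, a, q') := i in (inr q, a, 0, inr q').
Definition goodO (i : OI) : bool :=
  let '(q, a, q') := i in
  pb (exists x ts, [&& is_run dl q x ts, shape ts a & last_state q ts == q']).

Definition dB : seq TB :=
  [seq mkN i | i <- enum {: NI} & goodN i] ++
  [seq mkE i | i <- enum {: EI} & goodE i] ++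
  [seq mkO i | i <- enum {: OI} & goodO i].

Definition FB : {set BQ} := [set s : BQ | match s with
  | inl (p, r) => pb (AccA p (r : nat)%:Z [::])
  | inr q => pb (exists x, AccA q x [::]) end].

Definition s0B : BQ := inl (eq0 A, ord0).

Definition Bv : VASS1 Sigma := @Build_VASS1 Sigma BQ s0B FB dB.

Definition sem (s : BQ) (cB : int) (w : seq Sigma) : Prop :=
  match s with
  | inl (p, r) => AccA p (cB + (r : nat)%:Z) w
  | inr q => exists x, AccA q x w end.

Lemma sound (tsB : seq TB) : forall (st : BQ) (cB : int), 0 <= cB -> is_run dB st cB tsB ->
  last_state st tsB \in FB -> sem st cB (map trans_lab tsB).
Proof.
elim: tsB => [|t tsB IH] st cB Hc /=.
  move=> _; rewrite /last_state /= inE; case: st => [[p r]|q] /pbP H /=; last by [].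
  by apply: AccA_mono H _; rewrite lerDr.
case/and4P => Hin /eqP Hsrc Hfeas Hrest Hlast.
have := IH _ _ Hfeas Hrest Hlast.
rewrite !mem_cat in Hin; case/or3P: Hin => /mapP[x]; rewrite mem_filter => /andP[Hg _] Ht.
- move: x Ht Hg => [[[[[p r] a] q] r'] e] Ht /pbP [H0 [ts1 /and4P[H1 H2 /eqP H3 H4]]].
  subst t; rewrite /= in Hsrc *; subst st => /= HI.
  apply: (AccA_step (ts := ts1)) => //.
    apply: is_run_mono H1 _; move: Hfeas; rewrite /trans_upd /=; lia.
  rewrite H3; apply: AccA_mono HI _; move: H4; rewrite /trans_upd /=; lia.
- move: x Ht Hg => [[[p r] a] q] Ht /pbP [n Hn].
  subst t; rewrite /= in Hsrc *; subst st => /= [[x HI]].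
  have [HE _] := cminP (P := fun n => Ep p a q n%:Z) Hn.
  have HE' : Ep p a q (theta p a q)%:Z := HE.
  have [ts1 /and4P[H1 H2 /eqP H3 H4]] := HE' `|x|%N.
  apply: (AccA_step (ts := ts1)) => //.
    apply: is_run_mono H1 _; move: Hfeas; rewrite /trans_upd /=.
    move: (theta p a q) => th; lia.
  rewrite H3; apply: AccA_mono HI _; move: H4 Hfeas; rewrite /trans_upd /=.
  move: (theta p a q) => th; lia.
- move: x Ht Hg => [[q a] q'] Ht /pbP [y [ts1 /and3P[H1 H2 /eqP H3]]].
  subst t; rewrite /= in Hsrc *; subst st => /= [[x HI]].
  exists (y + Posz (absz x) + Posz (absz (y + sumU ts1))).
  apply: (AccA_step (ts := ts1)) => //.
    by apply: is_run_mono H1 _; lia.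
  rewrite H3; apply: AccA_mono HI _; lia.
Qed.


Lemma dB_N (i : NI) : goodN i -> mkN i \in dB.
Proof. by move=> H; rewrite mem_cat; apply/orP; left; apply: map_f; rewrite mem_filter H mem_enum. Qed.
Lemma dB_E (i : EI) : goodE i -> mkE i \in dB.
Proof.
by move=> H; rewrite !mem_cat; apply/or3P; apply: Or32; apply: map_f; rewrite mem_filter H mem_enum.
Qed.
Lemma dB_O (i : OI) : goodO i -> mkO i \in dB.
Proof.
by move=> H; rewrite !mem_cat; apply/or3P; apply: Or33; apply: map_f; rewrite mem_filter H mem_enum.
Qed.

Definition Inv (st : BQ) (cB : int) (pA : seq TR) : Prop :=
  match st with
  | inl (p, r) => p = last_state (eq0 A) pA /\ sumU pA <= cB + (r : nat)%:Z /\
                  ((r : nat) = R \/ cB = 0)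
  | inr q => q = last_state (eq0 A) pA end.

Lemma step_exists (st : BQ) (cB : int) pA blk a : Inv st cB pA -> 0 <= cB -> 0 <= sumU pA ->
  is_run dl (last_state (eq0 A) pA) (sumU pA) blk -> shape blk a ->
  exists t : TB, [/\ t \in dB, trans_src t = st, trans_lab t = a, 0 <= cB + trans_upd t &
     Inv (trans_tgt t) (cB + trans_upd t) (pA ++ blk)].
Proof.
set p := last_state _ pA; set c := sumU pA.
move=> HI Hc Hc0 Hr Hs.
have Hl : last_state (eq0 A) (pA ++ blk) = last_state p blk by rewrite last_state_cat.
have Hsum : sumU (pA ++ blk) = c + sumU blk by rewrite sumU_cat.
set q := last_state p blk.
case: st HI => [[p' r] [-> [Hcr HR]] | q' ->]; last first.
  exists (mkO (p, a, q)); split.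
  - by apply: dB_O; apply/pbP; exists c, blk; rewrite Hr Hs eqxx.
  - by [].
  - by [].
  - by rewrite /trans_upd /= addr0.
  - by rewrite /= Hl.
rewrite -/c in Hcr.
have HRdef : R = (E.*2 + Phi)%N by [].
case: (dichot (n := size blk) (leqnn _) Hr Hs Hc0) => [[sg /and5P[H1 H2 /eqP H3 H4 H5]]|HE].
  set e := sumU sg.
  have He : `|e| <= E%:R.
    apply: le_trans (sumU_bound HM (is_run_all H1)) _.
    by rewrite ler_nat /E leq_mul2r H5 orbT.
  have Hce : 0 <= c + e := is_run_ge0 H1 Hc0.
  set rr : nat := minn R (absz (cB + (r : nat)%:Z + e)%R).
  have Hrr : (rr < R.+1)%N by rewrite ltnS geq_minl.
  set ro : 'I_R.+1 := inord rr.
  have Hro : (ro : nat) = rr := inordK Hrr.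
  have Hee : ((absz (e + E%:Z)%R) < (E.*2).+1)%N by move: He; lia.
  set eo : 'I_(E.*2).+1 := inord (absz (e + E%:Z)%R).
  have Heo : eeN eo = e by rewrite /eeN inordK //; move: He; lia.
  exists (mkN (p, r, a, q, ro, eo)); split => //.
  - apply: dB_N; rewrite /goodN; apply/pbP; rewrite Heo Hro; split.
      rewrite /rr; move: He Hce Hcr HRdef; lia.
    exists sg; rewrite H2 H3 eqxx lexx /= andbT.
    case: (leqP R (absz (cB + (r : nat)%:Z + e)%R)) => HRC.
      apply: (is_run_large HM H1).
      have : (size sg * M <= E)%N by rewrite /E leq_mul2r H5 orbT.
      move: (size sg * M)%N => SM.
      rewrite /rr; move: He Hce Hcr HRC HRdef; lia.
    apply: is_run_mono H1 _; rewrite /rr; move: He Hce Hcr HRC; lia.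
  - rewrite /trans_upd /= Hro Heo /rr; move: He Hce Hcr; lia.
  - rewrite /trans_tgt /trans_upd /= Hl; split => //; split.
      rewrite Hsum Hro Heo /rr; move: He Hce Hcr H4; rewrite -/e.
      move: (minn _ _) => m; clearbody e c; move: (sumU blk) => sb; lia.
    rewrite Hro Heo /rr; case: (leqP R (absz (cB + (r : nat)%:Z + e)%R)) => HRC.
      by left.
    by right; move: HRC Hce Hcr; lia.
have HEn : Ep p a q (absz c)%:Z.
  have -> : (absz c)%:Z = c by move: Hc0; lia.
  exact: HE.
have [_ Hmin] := cminP (P := fun n => Ep p a q n%:Z) HEn.
have Hth := Hmin _ HEn.
exists (mkE (p, r, a, q)); split => //.
- by apply: dB_E; apply/pbP; exists (absz c).
- rewrite /trans_upd /=; move: Hth; rewrite /theta; move: (cmin _) => th.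
  move: Hcr Hc0; lia.
Qed.


Section Complete.
Variable (rA : seq TR -> Sigma -> seq TR) (fA : seq TR -> seq TR).

Fixpoint apre (pre : seq TR) (u : seq Sigma) : seq TR :=
  match u with [::] => pre | a :: u' => apre (pre ++ rA pre a) u' end.

Lemma apre_rcons pre u a : apre pre (rcons u a) = apre pre u ++ rA (apre pre u) a.
Proof. by elim: u pre => //= b u IH pre; rewrite IH. Qed.

Lemma eres_prefix pre v : exists s, eresolve rA fA pre v = pre ++ s.
Proof.
elim: v pre => [|a v IH] pre /=; first by exists (fA pre).
by have [s ->] := IH (pre ++ rA pre a); exists (rA pre a ++ s); rewrite catA.
Qed.

Definition Good (preB : seq TB) (a : Sigma) (t : TB) : Prop :=
  let pA := apre [::] (map trans_lab preB) in
  [/\ t \in dB, trans_src t = last_state s0B preB, trans_lab t = a,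
      0 <= sumU preB + trans_upd t &
      Inv (trans_tgt t) (sumU preB + trans_upd t) (pA ++ rA pA a)].

Definition rB (preB : seq TB) (a : Sigma) : TB :=
  epsilon (inhabits (s0B, a, 0, s0B)) (Good preB a).

Lemma complete (v : seq Sigma) : forall (preB : seq TB) pA,
  pA = apre [::] (map trans_lab preB) ->
  is_run dB s0B 0 preB -> Inv (last_state s0B preB) (sumU preB) pA ->
  is_run dl (eq0 A) 0 (eresolve rA fA pA v) ->
  last_state (eq0 A) (eresolve rA fA pA v) \in eF A ->
  eresolve_shape rA fA pA v ->
  [&& is_run dB s0B 0 (@vresolve Sigma Bv rB preB v),
      map trans_lab (@vresolve Sigma Bv rB preB v) == map trans_lab preB ++ v &
      last_state s0B (@vresolve Sigma Bv rB preB v) \in FB].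
Proof.
elim: v => [|a v IH] preB pA HpA HrB HI Hrun Hlast Hsh.
  move: Hrun Hlast Hsh; rewrite /= => Hrun Hlast Hsh.
  rewrite HrB cats0 eqxx /=.
  move: Hrun; rewrite is_run_cat add0r => /andP[HrA Hf].
  rewrite last_state_cat in Hlast.
  have HAcc : AccA (last_state (eq0 A) pA) (sumU pA) [::].
    by exists (fA pA); rewrite Hf Hlast /= (eqP Hsh) pmap_nseq_None eqxx.
  have Hc0 : 0 <= sumU pA by have := is_run_ge0 HrA (lexx 0); rewrite add0r.
  move: HI; case: (last_state s0B preB) => [[p r] [Hp [Hcr HR]]|q Hq]; rewrite inE; apply/pbP.
    rewrite -Hp in HAcc.
    have HAn : AccA p (absz (sumU pA))%:Z [::].
      by have -> : (absz (sumU pA))%:Z = sumU pA by move: Hc0; lia.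
    have [Hphi Hmin] := cminP (P := fun n => AccA p n%:Z [::]) HAn.
    have Hph : (phi p <= absz (sumU pA))%N := Hmin _ HAn.
    case: HR => [HR|HR].
      have Hphi' : AccA p (phi p)%:Z [::] := Hphi.
      apply: AccA_mono Hphi' _; rewrite HR.
      have : (phi p <= Phi)%N by rewrite /Phi; apply: (@leq_bigmax Q (fun q => phi q) p).
      have HRdef : R = (E.*2 + Phi)%N by [].
      move: (phi p) => ph; move: HRdef; lia.
    apply: AccA_mono HAcc _; move: Hcr; rewrite HR add0r.
    by move: (sumU pA) => x.
  by exists (sumU pA); rewrite Hq.
have E1 : eresolve rA fA pA (a :: v) = eresolve rA fA (pA ++ rA pA a) v by [].
have E2 : eresolve_shape rA fA pA (a :: v) =
  shape (rA pA a) a && eresolve_shape rA fA (pA ++ rA pA a) v by [].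
have E3 : @vresolve Sigma Bv rB preB (a :: v) = @vresolve Sigma Bv rB (rcons preB (rB preB a)) v by [].
rewrite E1 in Hrun Hlast; rewrite E3; rewrite E2 in Hsh.
move: Hsh => /andP[Hsh Hshr].
have [s Hs] := eres_prefix (pA ++ rA pA a) v.
have Hrun' := Hrun; move: Hrun'; rewrite Hs -catA is_run_cat add0r => /andP[HrA].
rewrite is_run_cat => /andP[Hblk _].
have Hc0 : 0 <= sumU pA by have := is_run_ge0 HrA (lexx 0); rewrite add0r.
have HcB : 0 <= sumU preB by have := is_run_ge0 HrB (lexx 0); rewrite add0r.
have [t [Ht1 Ht2 Ht3 Ht4 Ht5]] := step_exists HI HcB Hc0 Hblk Hsh.
have HG : Good preB a (rB preB a).
  rewrite /rB; apply: epsilon_spec; exists t; rewrite /Good -HpA; split => //.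
have [G1 G2 G3 G4 G5] := HG.
move: G5; rewrite -HpA => G5.
have := IH (rcons preB (rB preB a)) (pA ++ rA pA a).
rewrite map_rcons G3 apre_rcons -HpA cat_rcons; apply => //.
- rewrite -cats1 is_run_cat HrB /= G1 G2 eqxx add0r G4 //.
- by rewrite -cats1 last_state_cat sumU_cat sumU_cons sumU_nil addr0.
Qed.

End Complete.

End Construct.

Lemma eps_to_noeps (Sigma : finType) (L : seq Sigma -> Prop) : CH1eps L -> CH1 L.
Proof.
move=> [A [[r [f HD]] HL]].
have Hsound : forall w, vlang (Bv A) w -> elang A w.
  move=> w [ts /andP[/andP[Hr Hl] /eqP Hw]].
  have := sound (lexx 0) Hr Hl; rewrite /= add0r => -[ts' /and3P[H1 H2 H3]].
  by exists ts'; rewrite /eaccepting H1 H2 /eword -Hw.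
have Hcomp : forall w, elang A w ->
    vaccepting (@vresolve Sigma (Bv A) (rB r) [::] w) &&
    (map trans_lab (@vresolve Sigma (Bv A) (rB r) [::] w) == w).
  move=> w Hw; have /andP[Hsh /andP[Hrun Hlast]] := HD w Hw.
  have HI : Inv (@last_state _ Sigma (s0B A) [::]) (@sumU (vQ (Bv A)) Sigma [::])
               ([::] : seq (eQ A * option Sigma * int * eQ A)).
    by rewrite /= !sumU_nil; split => //; split; [ | right].
  have := complete (rA := r) (fA := f) (v := w) (preB := [::]) (pA := [::]) erefl
    (isT : is_run (dB A) (s0B A) 0 [::]) HI Hrun Hlast Hsh.
  by case/and3P => H1 H2 H3; rewrite /vaccepting /= H1 H3.
exists (Bv A); split.
  by exists (rB r) => w Hw; exact: Hcomp (Hsound w Hw).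
move=> w; split.
  move/HL => Hw; have /andP[H1 H2] := Hcomp w Hw.
  by exists (@vresolve Sigma (Bv A) (rB r) [::] w); rewrite H1 H2.
by move/Hsound/HL.
Qed.

Section Embed.
Variables (Sigma : finType) (B : VASS1 Sigma).
Local Notation QB := (vQ B).
Local Notation VT := (QB * Sigma * int * QB)%type.
Local Notation ET := (QB * option Sigma * int * QB)%type.

Definition emb (t : VT) : ET := (t.1.1.1, Some t.1.1.2, t.1.2, t.2).
Definition unemb (a : Sigma) (t : ET) : VT := (t.1.1.1, odflt a t.1.1.2, t.1.2, t.2).

Lemma emb_inj : injective emb.
Proof. by move=> [[[p1 l1] u1] q1] [[[p2 l2] u2] q2] [-> -> -> ->]. Qed.

Lemma unembK a : cancel emb (unemb a).
Proof. by move=> [[[p l] u] q]. Qed.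

Definition AE : EVASS1 Sigma := @Build_EVASS1 Sigma QB (vq0 B) (vF B) (map emb (vdelta B)).

Lemma run_emb p c (ts : seq VT) :
  is_run (map emb (vdelta B)) p c (map emb ts) = is_run (vdelta B) p c ts.
Proof. by elim: ts p c => //= t ts IH p c; rewrite mem_map ?IH //; exact: emb_inj. Qed.

Lemma last_emb p (ts : seq VT) : last_state p (map emb ts) = last_state p ts.
Proof. by rewrite /last_state -map_comp. Qed.

Lemma run_unemb p c (ts : seq ET) : is_run (map emb (vdelta B)) p c ts ->
  exists ts' : seq VT, ts = map emb ts'.
Proof.
elim: ts p c => [|t ts IH] p c /=; first by exists [::].
case/and4P => /mapP[t' _ ->] _ _ /IH [ts' ->]; by exists (t' :: ts').
Qed.

Lemma eword_emb (ts : seq VT) : pmap id (map trans_lab (map emb ts)) = map trans_lab ts.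
Proof. by elim: ts => //= t ts ->. Qed.

Lemma lang_emb w : vlang B w <-> elang AE w.
Proof.
split.
  move=> [ts /andP[/andP[H1 H2] H3]]; exists (map emb ts).
  by rewrite /eaccepting /eword /= run_emb last_emb H1 H2 eword_emb H3.
move=> [ts /andP[/andP[H1 H2] H3]].
have [ts' Hts] := run_unemb H1; subst ts.
exists ts'; move: H1 H2 H3; rewrite /eword /= run_emb last_emb eword_emb => H1 H2 H3.
by rewrite /vaccepting H1 H2 H3.
Qed.

Variable rv : seq VT -> Sigma -> VT.
Definition rE (pre : seq ET) (a : Sigma) : seq ET := [:: emb (rv (map (unemb a) pre) a)].
Definition fE (pre : seq ET) : seq ET := [::].

Lemma vres_prefix pre w : exists s, @vresolve Sigma B rv pre w = pre ++ s.
Proof.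
elim: w pre => [|a w IH] pre /=; first by exists [::]; rewrite cats0.
by have [s ->] := IH (rcons pre (rv pre a)); exists (rv pre a :: s); rewrite cat_rcons.
Qed.

Lemma eres_emb w : forall pre : seq VT,
  @eresolve Sigma AE rE fE (map emb pre) w = map emb (@vresolve Sigma B rv pre w).
Proof.
elim: w => [|a w IH] pre; first by rewrite /= cats0.
have -> : @eresolve Sigma AE rE fE (map emb pre) (a :: w) =
          @eresolve Sigma AE rE fE (map emb pre ++ rE (map emb pre) a) w by [].
rewrite /rE -map_comp (eq_map (unembK a)) map_id.
have -> : map emb pre ++ [:: emb (rv pre a)] = map emb (rcons pre (rv pre a)).
  by rewrite map_rcons cats1.
by rewrite IH.
Qed.

Lemma shape_emb w : forall pre : seq VT,
  map trans_lab (@vresolve Sigma B rv pre w) == map trans_lab pre ++ w ->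
  @eresolve_shape Sigma AE rE fE (map emb pre) w.
Proof.
elim: w => [|a w IH] pre; first by [].
have -> : @eresolve_shape Sigma AE rE fE (map emb pre) (a :: w) =
   (map trans_lab (rE (map emb pre) a) == rcons (nseq (size (rE (map emb pre) a)).-1 None) (Some a))
   && @eresolve_shape Sigma AE rE fE (map emb pre ++ rE (map emb pre) a) w by [].
have -> : @vresolve Sigma B rv pre (a :: w) = @vresolve Sigma B rv (rcons pre (rv pre a)) w by [].
have [s Hs] := vres_prefix (rcons pre (rv pre a)) w.
rewrite Hs => H.
have : map trans_lab pre ++ trans_lab (rv pre a) :: map trans_lab s == map trans_lab pre ++ a :: w.
  by move: H; rewrite map_cat map_rcons cat_rcons.
rewrite eqseq_cat // eqxx /= eqseq_cons => /andP[/eqP Hl Hs'].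
have E4 : rE (map emb pre) a = [:: emb (rv pre a)].
  by rewrite /rE -map_comp (eq_map (unembK a)) map_id.
rewrite E4; apply/andP; split.
  apply/eqP; rewrite /= -map_comp (eq_map (unembK a)) map_id; exact: (congr1 (fun x => [:: Some x]) Hl).
have -> : map emb pre ++ [:: emb (rv pre a)] = map emb (rcons pre (rv pre a)).
  by rewrite map_rcons cats1.
apply: IH; rewrite Hs map_cat map_rcons.
by rewrite eqseq_cat // eqxx.
Qed.

End Embed.

Lemma noeps_to_eps (Sigma : finType) (L : seq Sigma -> Prop) : CH1 L -> CH1eps L.
Proof.
move=> [B [[rv HD] HL]].
exists (AE B); split; last first.
  by move=> w; rewrite HL; exact: lang_emb.
exists (rE rv), (fE (B := B)) => w /lang_emb Hw.
have /andP[Hacc Hlab] := HD w Hw.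
have H0 := eres_emb rv w [::]; rewrite /= in H0.
rewrite H0 (shape_emb (pre := [::])) //=.
move: Hacc; rewrite /vaccepting /eaccepting /= run_emb last_emb //.
Qed.

Theorem mainTheorem6 (Sigma : finType) (L : seq Sigma -> Prop) :
  CH1 L <-> CH1eps L.
Proof. split; [exact: noeps_to_eps | exact: eps_to_noeps]. Qed.
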